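(* Let $G$ be a finite, simple, connected $(q+1)$-regular graph with $q\ge 1$, with $n$ vertices and $m$ edges, let $a\in[0,1]$ and $b\in\mathbb R$, and let $\tilde{\mathbf U}$ be the generalized Grover matrix of $G$ with parameters $a,b$. Set $\eta=(1-q)a+b(q+1)$ and $\sigma=b((1-q)a+bq)$. Then the $2m$ eigenvalues of $\tilde{\mathbf U}$ (counted with multiplicity) are: the $2n$ values \[ \lambda=\frac{\mu\eta\pm\sqrt{\mu^2\eta^2-4\sigma}}{2}, \] where $\mu$ runs over the eigenvalues of $\mathbf P(G)$ (with multiplicity), and the $2(m-n)$ values $b$ and $-b$, each with multiplicity $m-n$.
   Context: $D(G)$ is the set of $2m$ arcs of $G$ (for each edge $uv$, both $(u,v)$ and $(v,u)$); for $e=(u,v)$, $o(e)=u$, $t(e)=v$, $e^{-1}=(v,u)$, and $d_v=\deg v$. The generalized Grover matrix $\tilde{\mathbf U}=(\tilde U_{ef})_{e,f\in D(G)}$ has $\tilde U_{ef}=(2/d_{t(f)}-1)a+b$ if $t(f)=o(e)$ and $f\ne e^{-1}$; $\tilde U_{ef}=(2/d_{t(f)}-1)a$ if $f=e^{-1}$; $0$ otherwise. $\mathbf P(G)$ has entries $P_{uv}=1/\deg u$ if $u,v$ adjacent and $0$ otherwise. *)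

(* Defs.v *)
From HB Require Import structures.
From mathcomp Require Import all_boot all_order all_algebra.
From mathcomp Require Import complex.
Set Implicit Arguments. Unset Strict Implicit. Unset Printing Implicit Defensive.
Import Order.TTheory GRing.Theory Num.Theory.
Local Open Scope ring_scope.

(* A finite simple graph: vertex type T : finType, adjacency e : rel T,
   assumed symmetric and irreflexive in the theorem. *)

Definition arcs (T : finType) (e : rel T) : {set T * T} :=
  [set p : T * T | e p.1 p.2].

Definition deg (T : finType) (e : rel T) (v : T) : nat := #|[set w | e v w]|.

Definition nedges (T : finType) (e : rel T) : nat := #|arcs e| %/ 2.

Definition connected_graph (T : finType) (e : rel T) : Prop :=
  forall x y : T, connect e x y.

Definition grover_entry (R : fieldType) (T : finType) (e : rel T) (a b : R)
    (ee f : T * T) : R :=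
  let o := fun p : T * T => p.1 in
  let t := fun p : T * T => p.2 in
  let inv := fun p : T * T => (p.2, p.1) in
  if t f == o ee then
    if f == inv ee then (2 / (deg e (t f))%:R - 1) * a
    else (2 / (deg e (t f))%:R - 1) * a + b
  else 0.

Definition grover_mx (R : fieldType) (T : finType) (e : rel T) (a b : R)
  : 'M[R]_#|arcs e| :=
  \matrix_(i, j) grover_entry e a b (enum_val i) (enum_val j).

Definition trans_mx (R : fieldType) (T : finType) (e : rel T) : 'M[R]_#|T| :=
  \matrix_(i, j) (if e (enum_val i) (enum_val j)
                  then ((deg e (enum_val i))%:R)^-1 else 0).

(* Main.v *)
From HB Require Import structures.
From mathcomp Require Import all_boot all_order all_algebra.
From mathcomp Require Import complex.
From mathcomp Require Import ring zify.
Require Import Defs.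
Import Order.TTheory GRing.Theory Num.Theory.
Local Open Scope ring_scope.

Lemma sum_in {S : comNzRingType} {X : finType} (A : pred X) (p : X) (G : X -> S) :
  \sum_(x in A) (p == x)%:R * G x = (p \in A)%:R * G p.
Proof.
case: (boolP (p \in A)) => pA.
  rewrite (bigD1 p) //= eqxx mul1r big1 ?addr0 ?mul1r // => x /andP[_ /negbTE].
  by rewrite eq_sym => ->; rewrite mul0r.
rewrite mul0r big1 // => x xA; case: eqP => [px|]; last by rewrite mul0r.
by move: pA; rewrite px xA.
Qed.

Lemma sumI {S : comNzRingType} {X : finType} {A : pred X} (F : X -> S) :
  \sum_(i < #|A|) F (enum_val i) = \sum_(x in A) F x.
Proof. exact: (esym (big_enum_val F)). Qed.

Lemma WA (p k : nat) {S : comNzRingType} (A : 'M[S]_(p, k)) (B : 'M[S]_(k, p)) (t : S) :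
  t ^+ k * \det (t%:M - A *m B) = t ^+ p * \det (t%:M - B *m A).
Proof.
pose M := block_mx (t%:M : 'M_p) A B (1%:M : 'M_k).
have h1 : M *m block_mx 1%:M 0 (- B) 1%:M = block_mx (t%:M - A *m B) A 0 1%:M.
  by rewrite mulmx_block !mulmx1 !mulmx0 !mul1mx !mulmxN !add0r subrr.
have h2 : block_mx 1%:M 0 (- B) (t%:M) *m M = block_mx (t%:M) A 0 (t%:M - B *m A).
  rewrite mulmx_block !mul1mx !mul0mx !addr0 !mulNmx mulmx1.
  by rewrite scalar_mxC addNr addrC.
have d1 : \det M = \det (t%:M - A *m B).
  have := congr1 (@determinant _ _) h1.
  by rewrite det_mulmx det_lblock !det_scalar !expr1n !mulr1 det_ublock det_scalar expr1n mulr1.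
have := congr1 (@determinant _ _) h2.
rewrite det_mulmx det_lblock !det_ublock !det_scalar expr1n mul1r d1.
by move=> ->; rewrite mulrC.
Qed.

Notation inv p := (p.2, p.1).

Section Graph.
Variables (S : comNzRingType) (T : finType) (e : rel T).
Hypothesis e_sym : symmetric e.
Hypothesis e_irr : irreflexive e.

Local Notation N := #|arcs e|.

Definition Kmx : 'M[S]_(N, #|T|) := \matrix_(i, v) ((enum_val i).1 == enum_val v)%:R.
Definition Lmx : 'M[S]_(N, #|T|) := \matrix_(i, v) ((enum_val i).2 == enum_val v)%:R.
Definition Jmx : 'M[S]_N := \matrix_(i < N, j < N) (enum_val j == inv (enum_val i))%:R.
Definition Adj : 'M[S]_#|T| := \matrix_(u, v) (e (enum_val u) (enum_val v))%:R.

Lemma in_arcs (p : T * T) : (p \in arcs e) = e p.1 p.2.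
Proof. by rewrite inE. Qed.

Lemma ev_arc (i : 'I_N) : e (enum_val i).1 (enum_val i).2.
Proof. by rewrite -in_arcs enum_valP. Qed.

Lemma inv_arc (i : 'I_N) : inv (enum_val i) \in arcs e.
Proof. by rewrite in_arcs /= e_sym ev_arc. Qed.

Lemma sumT (F : T -> S) (x : T) :
  \sum_(v < #|T|) (x == enum_val v)%:R * F (enum_val v) = F x.
Proof.
rewrite (sumI (fun y => (x == y)%:R * F y)) sum_in.
by rewrite inE mul1r.
Qed.

Lemma sumA (F : T * T -> S) (x : T * T) :
  \sum_(i < N) (x == enum_val i)%:R * F (enum_val i) = (x \in arcs e)%:R * F x.
Proof. by rewrite (sumI (fun y => (x == y)%:R * F y)) sum_in. Qed.

Lemma KLt i j : (Kmx *m Lmx^T) i j = ((enum_val j).2 == (enum_val i).1)%:R.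
Proof.
rewrite !mxE; under eq_bigr do rewrite !mxE.
by rewrite (sumT (fun y => ((enum_val j).2 == y)%:R)).
Qed.

Lemma JK : Jmx *m Kmx = Lmx.
Proof.
apply/matrixP => i v; rewrite !mxE.
under eq_bigr do rewrite !mxE eq_sym.
by rewrite (sumA (fun y => (y.1 == enum_val v)%:R)) inv_arc mul1r.
Qed.

Lemma pairR (y : T * T) a b :
  (y.2 == a)%:R * (y.1 == b)%:R = ((b, a) == y)%:R * (1 : S).
Proof.
case: y => y1 y2 /=; rewrite xpair_eqE (eq_sym b) (eq_sym a).
by case: (y1 == b); case: (y2 == a); rewrite /= ?mulr1 ?mulr0 ?mul1r ?mul0r.
Qed.

Lemma LtK : Lmx^T *m Kmx = Adj.
Proof.
apply/matrixP => u v; rewrite !mxE.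
under eq_bigr do rewrite !mxE pairR.
by rewrite (sumA (fun _ => 1)) in_arcs /= mulr1 e_sym.
Qed.

Lemma sum_all (X : finType) (p : X) (G : X -> S) :
  \sum_x (p == x)%:R * G x = G p.
Proof.
rewrite (bigD1 p) //= eqxx mul1r big1 ?addr0 // => x /negbTE.
by rewrite eq_sym => ->; rewrite mul0r.
Qed.

Lemma sum_bool (X : finType) (P : pred X) : \sum_x (P x)%:R = (#|P|)%:R :> S.
Proof.
rewrite -sum1_card natr_sum [RHS]big_mkcond /=; apply: eq_bigr => x _.
by rewrite /in_mem /=; case: (P x).
Qed.

Lemma count_deg (w : T) : \sum_(i < N) ((enum_val i).2 == w)%:R = (deg e w)%:R :> S.
Proof.
rewrite (sumI (fun y => (y.2 == w)%:R)) big_mkcond /=.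
under eq_bigr do rewrite in_arcs.
rewrite -(pair_bigA _ (fun a b => if e a b then (b == w)%:R else 0)) /=.
transitivity (\sum_a (e a w)%:R : S).
  apply: eq_bigr => a _; rewrite -(sum_all _ w (fun b => (e a b)%:R)).
  apply: eq_bigr => b _; rewrite eq_sym.
  by case: (e a b); case: (b == w); rewrite /= ?mulr1 ?mulr0 ?mul1r ?mul0r.
under eq_bigr do rewrite e_sym.
rewrite sum_bool /deg; congr (_ %:R).
by rewrite cardsE.
Qed.

Lemma LtL (d : nat) : (forall v, deg e v = d) -> Lmx^T *m Lmx = (d%:R)%:M.
Proof.
move=> hd; apply/matrixP => u v; rewrite !mxE.
case: (eqVneq u v) => [<-|neq].
  under eq_bigr do rewrite !mxE -natrM mulnb andbb.
  by rewrite count_deg hd mulr1n.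
rewrite mulr0n big1 // => i _; rewrite !mxE.
case: eqP => [h1|]; case: eqP => [h2|]; rewrite ?mulr0 ?mul0r ?mul1r //.
by case/eqP: neq; apply: enum_val_inj; rewrite -h1 -h2.
Qed.

Lemma inv_inv (x : T * T) : inv (inv x) = x.
Proof. by case: x. Qed.

Lemma eq_inv (x y : T * T) : (inv x == y) = (x == inv y).
Proof. by case: x; case: y => a b c d; rewrite !xpair_eqE andbC. Qed.

Lemma JJ : Jmx *m Jmx = 1%:M.
Proof.
apply/matrixP => i k; rewrite !mxE.
under eq_bigr do rewrite !mxE eq_sym.
rewrite (sumA (fun y => (enum_val k == inv y)%:R)) inv_arc mul1r inv_inv.
by rewrite (inj_eq enum_val_inj) eq_sym.
Qed.

Lemma trLLt : \tr (Lmx *m Lmx^T) = N%:R.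
Proof.
transitivity (\sum_(i < N) (1 : S)); last by rewrite sumr_const card_ord.
apply: eq_bigr => i _; rewrite !mxE; under eq_bigr do rewrite !mxE.
by rewrite (sumT (fun y => ((enum_val i).2 == y)%:R)) eqxx.
Qed.

Lemma N_eq (d : nat) : (forall v, deg e v = d) -> (N%:R : S) = (#|T| * d)%:R.
Proof.
move=> hd; rewrite -trLLt mxtrace_mulC (@LtL d hd) mxtrace_scalar.
by rewrite natrM mulr_natl.
Qed.

Definition Eset : {set T * T} :=
  [set x in arcs e | (enum_rank x.1 < enum_rank x.2)%N].
Local Notation M' := #|Eset|.

Definition Qmx : 'M[S]_(N, M') :=
  \matrix_(i < N, k < M') (enum_val i == (enum_val k : T * T))%:R.
Definition Rmx : 'M[S]_(N, M') :=
  \matrix_(i < N, k < M') (enum_val i == inv (enum_val k : T * T))%:R.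

Lemma Eset_arcs x : x \in Eset -> x \in arcs e.
Proof. by rewrite inE => /andP[]. Qed.

Lemma inv_arcs x : x \in arcs e -> inv x \in arcs e.
Proof. by rewrite !in_arcs /= e_sym. Qed.

Lemma Eset_inv x : x \in Eset -> inv x \notin Eset.
Proof.
rewrite !inE /= => /andP[_ h]; apply/negP => /andP[_ h'].
by move: (ltn_trans h h'); rewrite ltnn.
Qed.

Lemma Eset_one x : x \in arcs e -> (x \in Eset)%:R + (inv x \in Eset)%:R = 1 :> S.
Proof.
move=> xa; have xa' : e x.1 x.2 by rewrite -in_arcs.
have ia' : e x.2 x.1 by rewrite e_sym.
rewrite !inE /= xa' ia' /=.
have ne : enum_rank x.1 != enum_rank x.2.
  rewrite (inj_eq enum_rank_inj); apply/eqP => h.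
  by move: xa; rewrite in_arcs h e_irr.
case: (ltngtP (enum_rank x.1) (enum_rank x.2)) => h /=; rewrite ?addr0 ?add0r //.
by move/val_inj: h => h; rewrite h eqxx in ne.
Qed.

Lemma ee_arcs (k : 'I_M') : (enum_val k : T * T) \in arcs e.
Proof. by apply: Eset_arcs; apply: enum_valP. Qed.

Lemma inv_eq (x y : T * T) : (inv x == inv y) = (x == y).
Proof. by rewrite eq_inv inv_inv. Qed.

Lemma QtQ : Qmx^T *m Qmx = 1%:M.
Proof.
apply/matrixP => k l; rewrite !mxE.
under eq_bigr do rewrite !mxE eq_sym.
rewrite (sumA (fun y => (y == enum_val l)%:R)) ee_arcs mul1r.
by rewrite (inj_eq enum_val_inj).
Qed.

Lemma RtR : Rmx^T *m Rmx = 1%:M.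
Proof.
apply/matrixP => k l; rewrite !mxE.
under eq_bigr do rewrite !mxE eq_sym.
rewrite (sumA (fun y => (y == inv (enum_val l))%:R)) inv_arcs ?ee_arcs // mul1r.
by rewrite inv_eq (inj_eq enum_val_inj).
Qed.

Lemma QtR : Qmx^T *m Rmx = 0.
Proof.
apply/matrixP => k l; rewrite !mxE.
under eq_bigr do rewrite !mxE eq_sym.
rewrite (sumA (fun y => (y == inv (enum_val l))%:R)) ee_arcs mul1r.
case: eqP => // h; have := Eset_inv _ (enum_valP l); by rewrite -h enum_valP.
Qed.

Lemma RtQ : Rmx^T *m Qmx = 0.
Proof.
apply/matrixP => k l; rewrite !mxE.
under eq_bigr do rewrite !mxE eq_sym.
rewrite (sumA (fun y => (y == enum_val l)%:R)) inv_arcs ?ee_arcs // mul1r.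
case: eqP => // h; have := Eset_inv _ (enum_valP k); by rewrite h enum_valP.
Qed.

Lemma sumE (F : T * T -> S) p :
  \sum_(k < M') (p == enum_val k)%:R * F (enum_val k) = (p \in Eset)%:R * F p.
Proof. by rewrite (sumI (fun y => (p == y)%:R * F y)) sum_in. Qed.

Lemma J_QR : Jmx = Qmx *m Rmx^T + Rmx *m Qmx^T.
Proof.
apply/matrixP => i j; rewrite !mxE.
under [X in _ = X + _]eq_bigr do rewrite !mxE.
under [X in _ = _ + X]eq_bigr do rewrite !mxE -eq_inv.
rewrite (sumE (fun y => (enum_val j == inv y)%:R)).
rewrite (sumE (fun y => (enum_val j == y)%:R)).
by rewrite -mulrDl Eset_one ?enum_valP // mul1r eq_sym.
Qed.

Lemma QR_one : Qmx *m Qmx^T + Rmx *m Rmx^T = 1%:M.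
Proof.
apply/matrixP => i j; rewrite !mxE.
under [X in X + _ = _]eq_bigr do rewrite !mxE.
under [X in _ + X = _]eq_bigr do rewrite !mxE -eq_inv.
rewrite (sumE (fun y => (enum_val j == y)%:R)).
rewrite (sumE (fun y => (enum_val j == inv y)%:R)) inv_inv.
rewrite -mulrDl Eset_one ?enum_valP // mul1r.
by rewrite (inj_eq enum_val_inj) eq_sym.
Qed.

Definition Wmx := row_mx Qmx Rmx.
Definition Sig : 'M[S]_(M' + M') := block_mx 0 1%:M 1%:M 0.

Lemma WtW : Wmx^T *m Wmx = 1%:M.
Proof.
by rewrite /Wmx tr_row_mx mul_col_row QtQ QtR RtQ RtR -scalar_mx_block.
Qed.

Lemma WWt : Wmx *m Wmx^T = 1%:M.
Proof. by rewrite /Wmx tr_row_mx mul_row_col QR_one. Qed.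

Lemma J_W : Jmx = Wmx *m (Sig *m Wmx^T).
Proof.
rewrite /Wmx /Sig tr_row_mx mul_block_col !mul0mx !mul1mx add0r addr0.
by rewrite mul_row_col J_QR addrC.
Qed.

Lemma N_M' : (N%:R : S) = (M' + M')%:R.
Proof.
by rewrite -(mxtrace1 S N) -WWt mxtrace_mulC WtW mxtrace1.
Qed.

Lemma detJ_WA (x b : S) :
  x ^+ (M' + M') * \det (x%:M - b *: Jmx) = x ^+ N * \det (x%:M - b *: Sig).
Proof.
have := WA _ _ (b *: Wmx) (Sig *m Wmx^T) x.
by rewrite -scalemxAl -J_W -scalemxAr -mulmxA WtW mulmx1.
Qed.

End Graph.

Lemma det_sig {S : comNzRingType} (m : nat) (x b : S) :
  x ^+ m * x ^+ m * \det (x%:M - b *: (block_mx 0 1%:M 1%:M 0 : 'M_(m + m)))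
  = (x * x) ^+ m * (x * x - b * b) ^+ m.
Proof.
have h : block_mx (x%:M : 'M_m) 0 (b%:M) (x%:M) *m (x%:M - b *: block_mx 0 1%:M 1%:M 0)
   = block_mx ((x * x)%:M) (- (x * b)%:M) 0 ((x * x - b * b)%:M).
  rewrite (scalar_mx_block m m x) scale_block_mx opp_block_mx add_block_mx mulmx_block.
  rewrite !scaler0 !oppr0 !addr0 !add0r !scalemx1 ?mul0mx ?mulmx0 ?addr0 ?add0r.
  rewrite !mulmxN -!scalar_mxM (mulrC b x) subrr addrC.
  by rewrite -!raddfN -!raddfD.
have := congr1 (@determinant _ _) h.
by rewrite det_mulmx det_lblock det_ublock !det_scalar exprMn => ->.
Qed.

Lemma char_poly_horner {F : fieldType} n (P : 'M[F]_n) y :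
  (char_poly P).[y] = \det (y%:M - P).
Proof.
rewrite /char_poly -horner_evalE -det_map_mx; congr (\det _).
apply/matrixP => i j; rewrite !mxE /= horner_evalE.
by rewrite hornerD hornerN hornerMn hornerX hornerC.
Qed.

Lemma prod_scale {F : fieldType} (r : seq F) (c : F) (G : F -> F) :
  c ^+ size r * \prod_(mu <- r) G mu = \prod_(mu <- r) (c * G mu).
Proof.
elim: r => [|m r IH]; first by rewrite !big_nil mulr1.
by rewrite !big_cons /= exprS -IH; ring.
Qed.

Lemma det_shift {F : fieldType} n (P : 'M[F]_n) (mus : seq F) s c :
  char_poly P = \prod_(mu <- mus) ('X - mu%:P) ->
  \det (s%:M - c *: P) = \prod_(mu <- mus) (s - c * mu).
Proof.
move=> hP.
have sz : size mus = n.
  have := size_char_poly P; rewrite hP size_prod_XsubC; by case.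
case: (eqVneq c 0) => [->|cn0].
  rewrite scale0r subr0 det_scalar -sz.
  have := prod_scale mus s (fun _ => 1); rewrite big1_eq mulr1 => ->.
  by apply: eq_bigr => mu _; rewrite mul0r subr0 mulr1.
have -> : s%:M - c *: P = c *: ((s / c)%:M - P).
  by rewrite scalerBr scale_scalar_mx mulrC divfK.
rewrite detZ -char_poly_horner hP horner_prod -sz prod_scale.
apply: eq_bigr => mu _; rewrite hornerXsubC mulrBr mulrC divfK //.
Qed.

Lemma prod_half {F : fieldType} (A s : F) : (2 : F) != 0 ->
  ((A + s) / 2) * ((A - s) / 2) = (A ^+ 2 - s ^+ 2) / 4.
Proof.
move=> h2; field; rewrite h2 andbT.
have -> : (4 : F) = 2 * 2 by rewrite -natrM.
by rewrite mulf_neq0.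
Qed.

Lemma quarter {F : fieldType} (s : F) : (2 : F) != 0 -> (4 * s) / 4 = s.
Proof.
move=> h2; field.
have -> : (4 : F) = 2 * 2 by rewrite -natrM.
by rewrite mulf_neq0.
Qed.

Lemma quad {Rg : comNzRingType} (x p m : Rg) :
  (x - p) * (x - m) = x * x - (p + m) * x + p * m.
Proof. by ring. Qed.

Lemma quadP {F : fieldType} (p m : F) :
  ('X - p%:P) * ('X - m%:P) = 'X * 'X - (p + m)%:P * 'X + (p * m)%:P.
Proof. by rewrite quad polyCD polyCM. Qed.

Lemma diag_id {F : fieldType} (z b c n : F) :
  z * z - b * b - c * - (b * n) = z * z + (c * b * n - b * b) - 0.
Proof. by ring. Qed.

Lemma edge_id {F : fieldType} (c z n et ni : F) : et = c * n -> ni * n = 1 ->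
  - (c * (z - 0)) = - (et * z * ni).
Proof.
move=> -> h; congr (- _); rewrite subr0 -[c * z]mulr1 -h; ring.
Qed.

Lemma zero_id {F : pzRingType} (c : F) : - (c * - 0) = - 0.
Proof. by rewrite oppr0 mulr0 oppr0. Qed.

Lemma fin_id {F : fieldType} (z s et mu : F) :
  z * z + s - et * z * mu = z * z - mu * et * z + s.
Proof. by ring. Qed.

Lemma poly_eval_eq {C : numDomainType} (p q : {poly C}) :
  (forall z, p.[z] = q.[z]) -> p = q.
Proof.
move=> h; apply/eqP; rewrite -subr_eq0; apply/eqP.
apply: (@roots_geq_poly_eq0 _ _ [seq i%:R | i <- iota 0 (size (p - q))]).
- apply/allP => z /mapP [i _ ->]; by rewrite /root hornerD hornerN h subrr.
- rewrite map_inj_uniq ?iota_uniq // => i j /eqP; rewrite eqr_nat => /eqP.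
  done.
- by rewrite size_map size_iota.
Qed.


Theorem corollary4 (R : rcfType) (T : finType) (e : rel T) (q : nat) (a b : R)
  (e_sym : symmetric e) (e_irr : irreflexive e)
  (e_conn : connected_graph e)
  (e_reg : forall v : T, deg e v = q.+1)
  (hq : (1 <= q)%N)
  (ha : 0 <= a <= 1)
  (mus : seq R[i])
  (hmus : char_poly (map_mx (real_complex R) (trans_mx R e))
          = \prod_(mu <- mus) ('X - mu%:P)) :
  let eta : R := (1 - q%:R) * a + b * (q%:R + 1) in
  let sigma : R := b * ((1 - q%:R) * a + b * q%:R) in
  let lam_p := fun mu : R[i] =>
     (mu * real_complex R eta + sqrtC (mu ^+ 2 * (real_complex R eta) ^+ 2 - 4 * real_complex R sigma)) / 2 in
  let lam_m := fun mu : R[i] =>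
     (mu * real_complex R eta - sqrtC (mu ^+ 2 * (real_complex R eta) ^+ 2 - 4 * real_complex R sigma)) / 2 in
  char_poly (map_mx (real_complex R) (grover_mx e a b))
  = \prod_(mu <- mus) (('X - (lam_p mu)%:P) * ('X - (lam_m mu)%:P))
    * ('X - (real_complex R b)%:P) ^+ (nedges e - #|T|)
    * ('X - (- real_complex R b)%:P) ^+ (nedges e - #|T|).
Proof.
move=> eta sigma lam_p lam_m.
have hN1 : #|arcs e| = (#|T| * q.+1)%N.
  by apply/eqP; rewrite -(eqr_nat R[i]) (@N_eq R[i] T e e_sym q.+1 e_reg).
have hN2 : #|arcs e| = (#|Eset T e| + #|Eset T e|)%N.
  by apply/eqP; rewrite -(eqr_nat R[i]) (@N_M' R[i] T e e_sym e_irr).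
have h2n : (#|T| * 2 <= #|T| * q.+1)%N by rewrite leq_mul2l ltnS hq orbT.
have hn : (#|T| <= #|Eset T e|)%N by lia.
have hm : nedges e = #|Eset T e| by rewrite /nedges hN2 addnn -muln2 mulnK.
rewrite hm.
pose c0b : R := (2 / (q.+1)%:R - 1) * a + b.
have hG : map_mx polyC (map_mx (real_complex R) (grover_mx e a b)) =
   ((real_complex R c0b)%:P) *: (Kmx {poly R[i]} T e *m (Lmx {poly R[i]} T e)^T)
   - ((real_complex R b)%:P) *: Jmx {poly R[i]} T e.
  apply/matrixP => i j; have hk := KLt {poly R[i]} T e i j; rewrite mxE in hk.
  rewrite !mxE hk /grover_entry /= !e_reg.
  case: (eqVneq (enum_val j) (inv (enum_val i))) => [h|h].
    by rewrite h /= eqxx /= !mulr1 -polyCB -rmorphB /c0b addrK.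
  by case: eqP => _; rewrite /= ?mulr1 ?mulr0 ?subr0 ?rmorph0.
rewrite /char_poly /char_poly_mx hG.
set K := Kmx {poly R[i]} T e; set L := Lmx {poly R[i]} T e.
set J := Jmx {poly R[i]} T e.
set be := (real_complex R c0b)%:P; set bp := (real_complex R b)%:P.
set x : {poly R[i]} := 'X.
set t := x * x - bp * bp.
have e1 : x%:M - (be *: (K *m L^T) - bp *: J) = (x%:M + bp *: J) - be *: (K *m L^T).
  by rewrite opprB addrA.
have hNM : (x%:M - bp *: J) *m (x%:M + bp *: J) = t%:M.
  rewrite mulmxDr !mulmxBl -scalar_mxM [bp *: J *m x%:M]scalar_mxC addrA subrK.
  by rewrite -scalemxAl -scalemxAr JJ // scalerA scalemx1 -raddfB.
have e2 : t%:M - be *: ((x%:M - bp *: J) *m K) *m L^T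
    = (x%:M - bp *: J) *m ((x%:M + bp *: J) - be *: (K *m L^T)).
  by rewrite mulmxBr hNM -scalemxAl -scalemxAr mulmxA.
have e3 : L^T *m (be *: ((x%:M - bp *: J) *m K))
    = be *: (x *: Adj {poly R[i]} T e - bp *: ((q.+1)%:R)%:M).
  rewrite -scalemxAr mulmxBl -scalemxAl JK // mul_scalar_mx mulmxBr -!scalemxAr.
  by rewrite LtK // (@LtL _ T e e_sym q.+1 e_reg).
have hWA := WA _ _ (be *: ((x%:M - bp *: J) *m K)) (L^T) t.
rewrite e2 e3 det_mulmx in hWA.
set E' := \det (t%:M - be *: (x *: Adj {poly R[i]} T e - bp *: ((q.+1)%:R)%:M)) in hWA.
have xn0 : forall k, x ^+ k != 0 by move=> k; rewrite expf_neq0 // polyX_eq0.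
have ht : t = (x - bp) * (x - (- real_complex R b)%:P).
  by rewrite /t polyCN opprK mulrDr !mulrBl [bp * x]mulrC addrA subrK.
have tn0 : forall k, t ^+ k != 0.
  by move=> k; rewrite expf_neq0 // ht mulf_neq0 // polyXsubC_eq0.
have hNx : \det (x%:M - bp *: J) = t ^+ #|Eset T e|.
  have h1 := @detJ_WA _ T e e_sym e_irr x bp.
  have h2 := det_sig #|Eset T e| x bp.
  rewrite [in X in _ = X * _]hN2 in h1.
  rewrite (mulfI (xn0 _) h1) /Sig.
  rewrite exprMn -!mulrA in h2.
  by move: h2 => /(mulfI (xn0 _)) /(mulfI (xn0 _)).
rewrite hNx in hWA.
have hD : \det (x%:M - (be *: (K *m L^T) - bp *: J)) = t ^+ (#|Eset T e| - #|T|) * E'.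
  apply: (mulfI (tn0 (#|T| + #|Eset T e|)%N)).
  rewrite e1 exprD -mulrA hWA mulrA -!exprD hN2; congr (t ^+ _ * _); lia.
rewrite hD.
have hq1 : (q.+1)%:R != 0 :> R by rewrite pnatr_eq0.
have heta : eta = c0b * (q.+1)%:R.
  rewrite /eta /c0b -natr1; move: hq1; rewrite -natr1 => hq1'; field.
  done.
have hsig : sigma = c0b * b * (q.+1)%:R - b * b.
  rewrite /sigma /c0b -natr1; move: hq1; rewrite -natr1 => hq1'; field.
  done.
have hE : E' = \prod_(mu <- mus)
    (x * x - (mu * real_complex R eta)%:P * x + (real_complex R sigma)%:P).
  apply: poly_eval_eq => z.
  rewrite /E' -[LHS]horner_evalE -det_map_mx horner_prod.
  have hmap : map_mx (horner_eval z)
     (t%:M - be *: (x *: Adj {poly R[i]} T e - bp *: ((q.+1)%:R)%:M))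
     = (z * z + real_complex R sigma)%:M
       - (real_complex R eta * z) *: map_mx (real_complex R) (trans_mx R e).
    apply/matrixP => u v; rewrite !mxE horner_evalE e_reg.
    case: (eqVneq u v) => [<-|neq].
      rewrite e_irr /= ?mulr1n !hornerE -polyC_natr hornerC hsig /=.
      by rewrite rmorphB !rmorphM rmorph_nat diag_id.
    rewrite /= ?mulr0n.
    case: (e _ _); rewrite !hornerE; last exact: zero_id.
    apply: edge_id.
      by rewrite heta rmorphM rmorph_nat.
    by rewrite -(rmorph_nat (real_complex R)) -rmorphM mulVf // rmorph1.
  rewrite hmap (det_shift _ _ _ _ _ hmus).
  by apply: eq_bigr => mu _; rewrite !hornerE fin_id.
have hfac : forall mu, (x - (lam_p mu)%:P) * (x - (lam_m mu)%:P)
    = x * x - (mu * real_complex R eta)%:P * x + (real_complex R sigma)%:P.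
  move=> mu.
  have h2 : (2 : R[i]) != 0 by rewrite pnatr_eq0.
  have hs : lam_p mu + lam_m mu = mu * real_complex R eta.
    by rewrite /lam_p /lam_m -mulrDl addrACA subrr addr0 mulrDl -splitr.
  have hp : lam_p mu * lam_m mu = real_complex R sigma.
    rewrite /lam_p /lam_m; set sq := sqrtC _.
    have hsq : sq ^+ 2 = mu ^+ 2 * real_complex R eta ^+ 2 - 4 * real_complex R sigma.
      exact: sqrtCK.
    rewrite prod_half // exprMn hsq opprB addrC subrK.
    by rewrite quarter.
  transitivity (x * x - (lam_p mu + lam_m mu)%:P * x + (lam_p mu * lam_m mu)%:P).
    exact: quadP.
  by rewrite hs hp.
rewrite hE (eq_bigr _ (fun mu _ => hfac mu)).
by rewrite -mulrA -exprMn -ht mulrC.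
Qed.
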